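(* Let $\pi_L$ be a uniformizer for $L$ and choose a uniformizer $\pi_K$ for $K$ with $\pi_K\equiv\pi_L^n\pmod{\pi_L^{n+1}}$. Let $e\ge1$ be an integer relatively prime to $pn$, let $\pi_{K_e}\in K^{sep}$ be a root of $X^e-\pi_K$, and set $K_e=K(\pi_{K_e})$, $L_e=LK_e$. Then: (1) $K_e/K$ and $L_e/L$ are totally ramified extensions of degree $e$; (2) there is a uniformizer $\pi_{L_e}$ of $L_e$ with $\pi_{L_e}^e=\pi_L$ and $\pi_{L_e}^n\equiv\pi_{K_e}\pmod{\pi_{L_e}^{n+1}}$; (3) if $F(X)\in X^n\cdot\mathcal{O}_K[[X]]$ satisfies $F(\pi_L)=\pi_K$, then there is a power series $F_e(X)=F(X^e)^{1/e}$ with coefficients in $\mathcal{O}_K$ (i.e. $F_e(X)\in\mathcal{O}_K[[X]]$ with $F_e(X)^e=F(X^e)$) such that $F_e(\pi_{L_e})=\pi_{K_e}$, where $\pi_{L_e}$ is as in (2).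
   Context: $p$ is a prime and $K$ is a field complete with respect to a discrete valuation, with perfect residue field of characteristic $p$; $K^{sep}$ is a fixed separable closure and $\mathcal{O}_K$ is the valuation ring of $K$. $L/K$ is a finite totally ramified subextension of $K^{sep}/K$ of degree $n=[L:K]>1$. *)

(* Defs.v *)
From HB Require Import structures.
From mathcomp Require Import all_boot all_order all_algebra all_field.
Set Implicit Arguments. Unset Strict Implicit. Unset Printing Implicit Defensive.
Import Order.TTheory GRing.Theory Num.Theory.
Local Open Scope ring_scope.

(* A valuation on a field E is modelled by v : E -> rat; the value v 0 is
   irrelevant (by convention v 0 = +oo), hence the predicates below. *)
Section Valued.
Variable E : fieldType.
Variable v : E -> rat.

Definition val_ge (x : E) (r : rat) : Prop := x = 0 \/ r <= v x.
Definition val_gt (x : E) (r : rat) : Prop := x = 0 \/ r < v x.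

Definition is_valuation : Prop :=
  (forall x y, x != 0 -> y != 0 -> v (x * y) = v x + v y) /\
  (forall x y, x != 0 -> y != 0 -> x + y != 0 -> Num.min (v x) (v y) <= v (x + y)).

Definition v_cauchy (u : nat -> E) : Prop :=
  forall r : rat, exists M, forall i j, (M <= i)%N -> (M <= j)%N -> val_ge (u i - u j) r.
Definition v_converges_to (u : nat -> E) (l : E) : Prop :=
  forall r : rat, exists M, forall i, (M <= i)%N -> val_ge (u i - l) r.
Definition v_series_to (a : nat -> E) (s : E) : Prop :=
  v_converges_to (fun N => \sum_(i < N) a i) s.
End Valued.

Section Ext.
Variables (K : fieldType) (E : fieldExtType K) (v : E -> rat).

Definition uniformizer (F : {subfield E}) (x : E) : Prop :=
  [/\ x \in F, x != 0, 0 < v x &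
      forall y, y \in F -> val_gt v y 0 ->
        exists2 z, z \in F & val_ge v z 0 /\ y = x * z].

Definition congr_mod (F : {subfield E}) (a b m : E) : Prop :=
  exists2 z, z \in F & val_ge v z 0 /\ a - b = m * z.

(* F2 / F1 is totally ramified of degree d: [F2 : F1] = d and the
   ramification index e(F2/F1) (defined by v(pi_1) = e * v(pi_2) for
   uniformizers pi_1, pi_2 of F1, F2) equals d. *)
Definition totally_ramified (F1 F2 : {subfield E}) (d : nat) : Prop :=
  [/\ (F1 <= F2)%VS, \dim_F1 F2 = d &
      exists pi1 pi2, [/\ uniformizer F1 pi1, uniformizer F2 pi2 &
                          v pi1 = d%:R * v pi2]].

(* v restricted to K is a (normalized) discrete valuation, K is complete,
   and its residue field is perfect of characteristic p. *)
Definition complete_dvf_perfect_residue (p : nat) : Prop :=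
  [/\ is_valuation v,
      (forall a : K, a != 0 -> exists z : int, v (a%:A) = z%:~R) /\
      (exists a : K, a != 0 /\ v (a%:A) = 1),
      (forall u : nat -> K, v_cauchy v (fun i => (u i)%:A) ->
          exists l : K, v_converges_to v (fun i => (u i)%:A) l%:A),
      val_gt v (p%:R : E) 0 &
      (forall a : K, val_ge v a%:A 0 ->
          exists2 b : K, val_ge v b%:A 0 & val_gt v (a%:A - (b%:A) ^+ p) 0)].
End Ext.

(* formal power series over K as coefficient sequences *)
Section PS.
Variable K : fieldType.
Definition ps_one : nat -> K := fun k => (k == 0%N)%:R.
Definition ps_mul (f g : nat -> K) : nat -> K :=
  fun k => \sum_(i < k.+1) f i * g (k - i)%N.
Definition ps_exp (f : nat -> K) (m : nat) : nat -> K := iter m (ps_mul f) ps_one.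
Definition ps_subst_pow (F : nat -> K) (e : nat) : nat -> K :=
  fun k => if (e %| k)%N then F (k %/ e)%N else 0.
End PS.

(* Main.v *)
Require Import Defs.
From HB Require Import structures.
From mathcomp Require Import all_boot all_order all_algebra all_field.
From mathcomp Require Import ring lra zify.
From Stdlib Require Import ClassicalEpsilon FunctionalExtensionality.
Set Implicit Arguments. Unset Strict Implicit. Unset Printing Implicit Defensive.
Import Order.TTheory GRing.Theory Num.Theory.
Local Open Scope ring_scope.
Section Val.
Variables (E : fieldType) (v : E -> rat).
Hypothesis hv : is_valuation v.

Lemma vM x y : x != 0 -> y != 0 -> v (x * y) = v x + v y.
Proof. by case: hv => h _; apply: h. Qed.

Lemma v1 : v 1 = 0.
Proof. have := vM (oner_neq0 E) (oner_neq0 E); rewrite mulr1 => h.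
lra. Qed.

Lemma vN1 : v (-1) = 0.
Proof. have h1 : (-1 : E) != 0 by rewrite oppr_eq0 oner_neq0.
have := vM h1 h1; rewrite mulrNN mulr1 v1 => h.
lra. Qed.

Lemma vN x : x != 0 -> v (- x) = v x.
Proof. move=> hx; rewrite -mulN1r vM ?vN1 ?add0r //; by rewrite oppr_eq0 oner_neq0. Qed.

Lemma vV x : x != 0 -> v (x^-1) = - v x.
Proof. move=> hx; have := vM hx (invr_neq0 hx); rewrite divff // v1 => h.
lra. Qed.

Lemma vX x k : x != 0 -> v (x ^+ k) = k%:R * v x.
Proof. move=> hx; elim: k => [|k ih]; first by rewrite expr0 v1 mul0r.
by rewrite exprS vM ?expf_neq0 // ih -add1n natrD mulrDl mul1r. Qed.

Lemma vD x y : x != 0 -> y != 0 -> x + y != 0 -> Num.min (v x) (v y) <= v (x + y).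
Proof. by case: hv => _ h; apply: h. Qed.

Lemma vge0 x r : x = 0 -> val_ge v x r. Proof. by left. Qed.

Lemma vge_le x r s : val_ge v x r -> s <= r -> val_ge v x s.
Proof. by case=> [->|h] hs; [left|right; apply: le_trans h]. Qed.

Lemma vge_exact x : val_ge v x (v x). Proof. by right. Qed.

Lemma vge_add x y r : val_ge v x r -> val_ge v y r -> val_ge v (x + y) r.
Proof.
case=> [->|hx]; first by rewrite add0r.
case=> [->|hy]; first by rewrite addr0; right.
have [->|nx] := eqVneq x 0; first by rewrite add0r; right.
have [->|ny] := eqVneq y 0; first by rewrite addr0; right.
have [->|nxy] := eqVneq (x + y) 0; first by left.
right; apply: le_trans (vD nx ny nxy); by rewrite le_min hx hy.
Qed.

Lemma vge_opp x r : val_ge v x r -> val_ge v (- x) r.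
Proof.
case=> [->|h]; first by rewrite oppr0; left.
have [->|nx] := eqVneq x 0; first by rewrite oppr0; left.
by right; rewrite vN.
Qed.

Lemma vge_sub x y r : val_ge v x r -> val_ge v y r -> val_ge v (x - y) r.
Proof. by move=> h1 h2; apply: vge_add h1 (vge_opp h2). Qed.

Lemma vge_mul x y r s : val_ge v x r -> val_ge v y s -> val_ge v (x * y) (r + s).
Proof.
case=> [->|hx]; first by rewrite mul0r; left.
case=> [->|hy]; first by rewrite mulr0; left.
have [->|nx] := eqVneq x 0; first by rewrite mul0r; left.
have [->|ny] := eqVneq y 0; first by rewrite mulr0; left.
by right; rewrite vM // lerD.
Qed.

Lemma vge_1 : val_ge v 1 0. Proof. by right; rewrite v1. Qed.

Lemma vge_X x k r : val_ge v x r -> val_ge v (x ^+ k) (k%:R * r).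
Proof.
move=> h; elim: k => [|k ih]; first by rewrite expr0 mul0r; exact: vge_1.
rewrite exprS -add1n natrD mulrDl mul1r; exact: vge_mul.
Qed.

Lemma vge_sum (I : Type) (s : seq I) (P : pred I) (F : I -> E) r :
  (forall i, P i -> val_ge v (F i) r) -> val_ge v (\sum_(i <- s | P i) F i) r.
Proof.
move=> h; apply: (big_ind (fun x => val_ge v x r)); first by left.
  by move=> x y; apply: vge_add.
exact: h.
Qed.

Lemma vge_div x y r : val_ge v x r -> y != 0 -> val_ge v (x / y) (r - v y).
Proof.
move=> hx ny; have := vge_mul hx (vge_exact (y^-1)).
by rewrite vV.
Qed.

Lemma vge_eq0 x : (forall r, val_ge v x r) -> x = 0.
Proof.
move=> h; have [//|nx] := eqVneq x 0.
case: (h (v x + 1)) => // hh; exfalso; move: hh; lra.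
Qed.

Lemma v_strict x y : x != 0 -> y != 0 -> v x < v y -> v (x + y) = v x.
Proof.
move=> nx ny lt.
have nxy : x + y != 0.
  apply: contraTneq lt => /eqP; rewrite addr_eq0 => /eqP ->.
  by rewrite vN // ltxx.
apply/eqP; rewrite eq_le; apply/andP; split; last first.
  by have := vD nx ny nxy; rewrite (min_idPl (ltW lt)).
have nny : - y != 0 by rewrite oppr_eq0.
have := vD nxy nny; rewrite addrK => /(_ nx).
rewrite ge_min vN //; case/orP => // h; exfalso; move: h lt; lra.
Qed.

Lemma vge_gt x r s : val_ge v x r -> s < r -> val_gt v x s.
Proof. by case=> [->|h] hs; [left|right; apply: lt_le_trans h]. Qed.

End Val.
Lemma frac_neq (z1 z2 : int) (i m N : nat) : (i < m)%N -> (m < N)%N ->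
  z1%:~R + i%:R / N%:R != z2%:~R + m%:R / N%:R :> rat.
Proof.
move=> him hmN; apply/negP => /eqP h.
have hN : (N%:R : rat) != 0 by rewrite pnatr_eq0 -lt0n (leq_ltn_trans _ hmN).
have h2 : ((z1 * N%:Z + i%:Z)%:~R : rat) = (z2 * N%:Z + m%:Z)%:~R.
  rewrite !rmorphD !rmorphM /=.
  have -> : (z1%:~R * N%:R + i%:R : rat) = (z1%:~R + i%:R / N%:R) * N%:R by field.
  by rewrite h; field.
move/intr_inj: h2 => h3.
have : ((z1 - z2) * N%:Z = m%:Z - i%:Z)%R by rewrite mulrBl; lia.
case: (ltrgtP z1 z2) => hz.
- have : ((z1 - z2) * N%:Z <= 0)%R by rewrite nmulr_rle0 ?subr_lt0 //; lia.
  lia.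
- have : (N%:Z <= (z1 - z2) * N%:Z)%R by rewrite ler_pMl; lia.
  lia.
- rewrite hz subrr mul0r; lia.
Qed.
Section Ext.
Variables (K : fieldType) (E : fieldExtType K) (v : E -> rat).
Hypothesis hv : is_valuation v.
Hypothesis hZ : forall a : K, a != 0 -> exists z : int, v (a%:A) = z%:~R.

Lemma alg_neq0 (a : K) : a != 0 -> (a%:A : E) != 0.
Proof. by move=> h; rewrite scaler_eq0 oner_eq0 orbF. Qed.

Lemma vterm (w : E) (N : nat) (a : K) i : w != 0 -> v w = N%:R^-1 -> a != 0 ->
  v (a%:A * w ^+ i) = v a%:A + i%:R / N%:R.
Proof.
move=> nw vw na; rewrite vM // ?alg_neq0 ?expf_neq0 //.
by rewrite vX // vw.
Qed.

Lemma KL (w : E) (N : nat) : (0 < N)%N -> w != 0 -> v w = N%:R^-1 ->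
 forall (a : nat -> K) m, (m <= N)%N -> (exists2 i, (i < m)%N & a i != 0) ->
 \sum_(i < m) (a i)%:A * w ^+ i != 0 /\
 exists i, [/\ (i < m)%N, a i != 0,
   v (\sum_(i < m) (a i)%:A * w ^+ i) = v (a i)%:A + i%:R / N%:R &
   forall j, (j < m)%N -> a j != 0 ->
     v (\sum_(i < m) (a i)%:A * w ^+ i) <= v (a j)%:A + j%:R / N%:R].
Proof.
move=> N0 nw vw a; elim=> [|m ih] hmN [i0 hi0 ai0] //.
rewrite big_ord_recr /=.
have [am0|am0] := eqVneq (a m) 0.
  have him : (i0 < m)%N.
    move: hi0; rewrite ltnS leq_eqVlt => /orP [/eqP hh|//].
    by move: ai0; rewrite hh am0 eqxx.
  case: (ih (ltnW hmN) (ex_intro2 _ _ i0 him ai0)) => ns [i [hi ai vs hmin]].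
  rewrite am0 scale0r mul0r addr0; split=> //; exists i; split => //; first exact: ltnW.
  move=> j hj aj; apply: hmin => //.
  move: hj; rewrite ltnS leq_eqVlt => /orP [/eqP hh|//].
  by move: aj; rewrite hh am0 eqxx.
have [hex|hnex] := boolP [exists i : 'I_m, a i != 0].
  case/existsP: hex => i1 ai1.
  case: (ih (ltnW hmN) (ex_intro2 _ _ (nat_of_ord i1) (ltn_ord i1) ai1)) => ns [i [hi ai vs hmin]].
  set s := \sum_(i < m) _ in ns vs hmin *.
  have nt : (a m)%:A * w ^+ m != 0 by rewrite mulf_neq0 ?alg_neq0 ?expf_neq0.
  have vt := vterm m nw vw am0.
  case: (hZ ai) => z1 hz1; case: (hZ am0) => z2 hz2.
  have hne : v s != v ((a m)%:A * w ^+ m).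
    by rewrite vs vt hz1 hz2 frac_neq.
  case: (ltgtP (v s) (v ((a m)%:A * w ^+ m))) hne => // hlt _.
    rewrite v_strict //; split.
      apply: contraTneq hlt => /eqP; rewrite addr_eq0 => /eqP ->.
      by rewrite vN // ltxx.
    exists i; split => //; first exact: ltnW.
    move=> j; rewrite ltnS leq_eqVlt => /orP [/eqP ->|hj] aj.
      by rewrite -vt ltW.
    exact: hmin.
  rewrite addrC v_strict //; split.
    apply: contraTneq hlt => /eqP; rewrite addr_eq0 => /eqP ->.
    by rewrite vN // ltxx.
  exists m; split => //.
  move=> j; rewrite ltnS leq_eqVlt => /orP [/eqP ->|hj] aj; first by rewrite vt.
  by apply: le_trans (ltW hlt) _; apply: hmin.
have h0 : \sum_(i < m) (a i)%:A * w ^+ i = 0.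
  apply: big1 => i _; move/existsPn: hnex => /(_ i); rewrite negbK => /eqP ->.
  by rewrite scale0r mul0r.
rewrite h0 add0r; split; first by rewrite mulf_neq0 ?alg_neq0 ?expf_neq0.
exists m; split => //; first by rewrite (vterm _ nw vw am0).
move=> j; rewrite ltnS leq_eqVlt => /orP [/eqP ->|hj] aj; first by rewrite (vterm _ nw vw am0).
by move/existsPn: hnex => /(_ (Ordinal hj)); rewrite aj.
Qed.
End Ext.
Section Basis.
Variables (K : fieldType) (E : fieldExtType K) (v : E -> rat).
Hypothesis hv : is_valuation v.
Hypothesis hZ : forall a : K, a != 0 -> exists z : int, v (a%:A) = z%:~R.

Definition powt (w : E) N : N.-tuple E := [tuple w ^+ i | i < N].

Lemma powt_nth (w : E) N (i : 'I_N) : (powt w N)`_i = w ^+ i.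
Proof. by rewrite -tnth_nth tnth_mktuple. Qed.

Definition ext0 N (k : 'I_N -> K) (j : nat) : K :=
  if insub j is Some i then k i else 0.

Lemma ext0E N (k : 'I_N -> K) (i : 'I_N) : ext0 k i = k i.
Proof. by rewrite /ext0 valK. Qed.

Lemma sum_conv N (k : 'I_N -> K) (w : E) :
  \sum_(i < N) k i *: (powt w N)`_i = \sum_(i < N) (ext0 k i)%:A * w ^+ i.
Proof. by apply: eq_bigr => i _; rewrite powt_nth ext0E mulr_algl. Qed.

Variables (w : E) (N : nat).
Hypotheses (N0 : (0 < N)%N) (nw : w != 0) (vw : v w = N%:R^-1).

Lemma powt_free : free (powt w N).
Proof.
apply/freeP => k hk i; apply/eqP; apply: contraT => nki.
have := @KL K E v hv hZ w N N0 nw vw (ext0 k) N (leqnn N).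
rewrite -sum_conv hk eqxx => /(_ (ex_intro2 _ _ (nat_of_ord i) (ltn_ord i) _)).
by rewrite ext0E => /(_ nki) [].
Qed.

Lemma dim_ge (F : {subfield E}) : w \in F -> (N <= \dim F)%N.
Proof.
move=> wF; have := powt_free; rewrite /free size_tuple => /eqP <-.
apply: dimvS; apply/span_subvP => x /mapP [i _ ->]; exact: rpredX.
Qed.

Lemma basis_pow (F : {subfield E}) : w \in F -> \dim F = N -> basis_of F (powt w N).
Proof.
move=> wF dF; rewrite basisEfree powt_free size_tuple dF leqnn andbT /=.
apply/span_subvP => x /mapP [i _ ->]; exact: rpredX.
Qed.

Lemma val_in (F : {subfield E}) y : w \in F -> \dim F = N -> y \in F -> y != 0 ->
  exists (z : int) (i : nat), (i < N)%N /\ v y = z%:~R + i%:R / N%:R.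
Proof.
move=> wF dF yF ny.
have hy := coord_basis (basis_pow wF dF) yF.
rewrite sum_conv in hy.
have [hex|hnex] := boolP [exists i : 'I_N, ext0 (coord (powt w N) ^~ y) i != 0].
  case/existsP: hex => i ai.
  case: (@KL K E v hv hZ w N N0 nw vw _ N (leqnn N) (ex_intro2 _ _ (nat_of_ord i) (ltn_ord i) ai)).
  move=> _ [j [hj aj vs _]]; case: (hZ aj) => z hz.
  by exists z, j; split => //; rewrite hy vs hz.
exfalso; move: ny; rewrite hy big1 ?eqxx // => i _.
by move/existsPn: hnex => /(_ i); rewrite negbK => /eqP ->; rewrite scale0r mul0r.
Qed.

Lemma coord_bound (F : {subfield E}) y r (i : 'I_N) : w \in F -> \dim F = N -> y \in F ->
  val_ge v y r -> val_ge v (coord (powt w N) i y)%:A (r - 1).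
Proof.
move=> wF dF yF hy.
have [ci0|nci] := eqVneq (coord (powt w N) i y) 0.
  by left; rewrite ci0 scale0r.
have hyE := coord_basis (basis_pow wF dF) yF.
rewrite sum_conv in hyE.
have ai : ext0 (fun j => coord (powt w N) j y) i != 0 by rewrite ext0E.
case: (@KL K E v hv hZ w N N0 nw vw _ N (leqnn N) (ex_intro2 _ _ (nat_of_ord i) (ltn_ord i) ai)).
move=> nz [j [_ _ _ hmin]].
have := hmin i (ltn_ord i); rewrite ext0E => /(_ nci) hle.
case: hy => [y0|hy]; first by exfalso; move: nz; rewrite -hyE y0 eqxx.
right; rewrite -hyE in hle.
have hiN : (i%:R / N%:R : rat) <= 1.
  rewrite ler_pdivrMr ?ltr0n // mul1r ler_nat; exact: ltnW.
lra.
Qed.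
End Basis.
Lemma ratN_pos (z : int) (i N : nat) : (0 < N)%N -> 0 < z%:~R + i%:R / N%:R :> rat ->
  N%:R^-1 <= z%:~R + i%:R / N%:R :> rat.
Proof.
move=> N0 h.
have hN : (0 : rat) < N%:R by rewrite ltr0n.
have h1 : (0 : rat) < (z * N%:Z + i%:Z)%:~R.
  rewrite !rmorphD !rmorphM /=.
  have -> : (z%:~R * N%:R + i%:R : rat) = (z%:~R + i%:R / N%:R) * N%:R by field; lra.
  exact: mulr_gt0.
have h2 : (1 : rat) <= (z * N%:Z + i%:Z)%:~R.
  rewrite ltr0z in h1; rewrite (_ : (1 : rat) = (1 : int)%:~R) // ler_int; lia.
move: h2; rewrite !rmorphD !rmorphM /= => h2.
have -> : z%:~R + i%:R / N%:R = (z%:~R * N%:R + i%:R : rat) / N%:R by field; lra.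
have : 1 * N%:R^-1 <= (z%:~R * N%:R + i%:R) * N%:R^-1 :> rat by rewrite ler_pM2r ?invr_gt0.
by rewrite mul1r.
Qed.

Lemma archi_rat (r d : rat) : 0 < d -> exists M : nat, r <= M%:R * d.
Proof.
move=> d0; have [r0|r0] := lerP r 0.
  by exists 0%N; rewrite mul0r.
have := @archi_boundP _ (r / d) (ltW (divr_gt0 r0 d0)).
set M := Num.Def.archi_bound _ => h; exists M.
by rewrite -ler_pdivrMr // ltW.
Qed.

Section Unif.
Variables (K : fieldType) (E : fieldExtType K) (v : E -> rat).
Hypothesis hv : is_valuation v.
Hypothesis hZ : forall a : K, a != 0 -> exists z : int, v (a%:A) = z%:~R.

Lemma unif_pow (F : {subfield E}) (w : E) N : (0 < N)%N -> w != 0 -> v w = N%:R^-1 ->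
  w \in F -> \dim F = N -> uniformizer v F w.
Proof.
move=> N0 nw vw wF dF; split=> //; first by rewrite vw invr_gt0 ltr0n.
move=> y yF hy; exists (y / w); first by rewrite rpredM ?rpredV.
split; last by rewrite mulrC divfK.
have [->|ny] := eqVneq y 0; first by left; rewrite mul0r.
case: hy => [y0|hy]; first by move: ny; rewrite y0 eqxx.
case: (val_in hv hZ N0 nw vw wF dF yF ny) => z [i [hi vy]].
have := vge_div hv (vge_exact v y) nw; rewrite vw => h.
apply: vge_le h _; rewrite subr_ge0 vy; apply: ratN_pos => //; by rewrite -vy.
Qed.

Lemma unif_val (F : {subfield E}) x y : uniformizer v F x -> uniformizer v F y -> v x = v y.
Proof.
have key : forall x y, uniformizer v F x -> uniformizer v F y -> v x <= v y.
  move=> a b [aF na va ha] [bF nb vb hb].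
  case: (ha b bF (or_intror vb)) => z zF [hz bz].
  have nz : z != 0 by apply: contraNneq nb => z0; rewrite bz z0 mulr0.
  case: hz => [z0|hz]; first by move: nz; rewrite z0 eqxx.
  by rewrite bz vM // lerDl.
by move=> hx hy; apply/eqP; rewrite eq_le !key.
Qed.
End Unif.
Section Hensel.
Variables (K : fieldType) (E : fieldExtType K) (v : E -> rat).
Hypothesis hv : is_valuation v.

Definition complete_in (F : {subfield E}) := forall u : nat -> E,
  (forall i, u i \in F) -> v_cauchy v u -> exists2 l, l \in F & v_converges_to v u l.

Lemma integ t d : 0 <= d -> val_ge v (t - 1) d -> val_ge v t 0.
Proof.
move=> d0 h; by have := vge_add hv (vge_le h d0) (vge_1 hv); rewrite subrK.
Qed.

Lemma one_mul t s d : 0 <= d -> val_ge v (t - 1) d -> val_ge v (s - 1) d -> val_ge v (t * s - 1) d.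
Proof.
move=> d0 ht hs; have -> : t * s - 1 = (t - 1) * s + (s - 1) by ring.
apply: (vge_add hv) => //; rewrite -[d]addr0; apply: (vge_mul hv) => //; exact: integ hs.
Qed.

Lemma one_X t a d : 0 <= d -> val_ge v (t - 1) d -> val_ge v (t ^+ a - 1) d.
Proof.
move=> d0 ht; elim: a => [|a ih]; first by rewrite expr0 subrr; left.
by rewrite exprS; apply: one_mul.
Qed.

Lemma integ_mul x y : val_ge v x 0 -> val_ge v y 0 -> val_ge v (x * y) 0.
Proof. by move=> h1 h2; have := vge_mul hv h1 h2; rewrite addr0. Qed.

Lemma integ_X x k : val_ge v x 0 -> val_ge v (x ^+ k) 0.
Proof. by move=> h; have := vge_X hv k h; rewrite mulr0. Qed.

Lemma diffX x y e r : val_ge v x 0 -> val_ge v y 0 -> val_ge v (x - y) r ->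
  val_ge v (x ^+ e - y ^+ e) r.
Proof.
move=> hx hy hxy; rewrite subrXX.
have hs : val_ge v (\sum_(i < e) x ^+ (e.-1 - i) * y ^+ i) 0.
  apply: (vge_sum hv) => i _; apply: integ_mul; exact: integ_X.
by have := vge_mul hv hxy hs; rewrite addr0.
Qed.

Lemma telesc (x : nat -> E) d i j : (i <= j)%N ->
  (forall k, val_ge v (x k.+1 - x k) (k.+1%:R * d)) -> 0 <= d ->
  val_ge v (x j - x i) (i.+1%:R * d).
Proof.
move=> hij hx d0; rewrite -telescope_sumr // big_nat_cond.
apply: (vge_sum hv) => k /andP [/andP [hik _] _]; apply: vge_le (hx k) _.
by rewrite ler_wpM2r // ler_nat ltnS.
Qed.

Lemma Hensel (F : {subfield E}) (e : nat) (u : E) (d : rat) :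
  complete_in F -> (e%:R : E) != 0 -> v e%:R = 0 -> u \in F -> 0 < d ->
  val_ge v (u - 1) d -> exists2 y, y \in F & y ^+ e = u /\ val_ge v (y - 1) d.
Proof.
move=> cF ne ve uF d0 hu.
pose x := fix x k := if k is k'.+1 then x k' + (u - x k' ^+ e) / e%:R else 1.
have xF : forall k, x k \in F.
  elim=> [|k ih] /=; first exact: rpred1.
  by rewrite rpredD // rpredM ?rpredV ?rpredB ?rpredX ?rpred_nat.
have inv : forall k, val_ge v (x k - 1) d /\ val_ge v (u - x k ^+ e) (k.+1%:R * d).
  elim=> [|k [ih1 ih2]] /=.
    by rewrite subrr expr1n mul1r; split=> //; left.
  set eps := u - x k ^+ e.
  have he : val_ge v (eps / e%:R) (k.+1%:R * d).
    by have := vge_div hv ih2 ne; rewrite ve subr0.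
  have kd : d <= k.+1%:R * d.
    have : (1 : rat) <= k.+1%:R by rewrite ler1n.
    nra.
  have h1 : val_ge v (x k + eps / e%:R - 1) d.
    have -> : x k + eps / e%:R - 1 = (x k - 1) + eps / e%:R by ring.
    by apply: (vge_add hv) ih1 (vge_le he kd).
  split => //.
  set x' := x k + eps / e%:R in h1 *.
  have -> : u - x' ^+ e = eps / e%:R * (e%:R - \sum_(i < e) x' ^+ (e.-1 - i) * x k ^+ i).
    have hx : x' ^+ e - x k ^+ e = eps / e%:R * \sum_(i < e) x' ^+ (e.-1 - i) * x k ^+ i.
      by rewrite subrXX /x' [x k + _]addrC addrK.
    by rewrite mulrBr divfK // -hx /eps; ring.
  have -> : k.+2%:R * d = k.+1%:R * d + d :> rat by rewrite -[k.+2]addn1 natrD mulrDl mul1r.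
  apply: (vge_mul hv) => //.
  have -> : (e%:R : E) - \sum_(i < e) x' ^+ (e.-1 - i) * x k ^+ i
      = \sum_(i < e) (1 - x' ^+ (e.-1 - i) * x k ^+ i).
    by rewrite sumrB sumr_const card_ord.
  apply: (vge_sum hv) => i _; rewrite -opprB; apply: (vge_opp hv).
  by apply: (one_mul (ltW d0)); apply: one_X (ltW d0) _.
have step : forall k, val_ge v (x k.+1 - x k) (k.+1%:R * d).
  move=> k /=; rewrite addrC addKr.
  by have := vge_div hv (inv k).2 ne; rewrite ve subr0.
have cauchy : v_cauchy v x.
  move=> r; case: (archi_rat r d0) => M hM; exists M => i j hi hj.
  have [hij|hji] := leqP i j.
    rewrite -opprB; apply: (vge_opp hv); apply: vge_le (telesc hij step (ltW d0)) _.
    apply: le_trans hM _; apply: ler_wpM2r; [exact: ltW|rewrite ler_nat; exact: leqW].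
  apply: vge_le (telesc (ltnW hji) step (ltW d0)) _.
  apply: le_trans hM _; apply: ler_wpM2r; [exact: ltW|rewrite ler_nat; exact: leqW].
case: (cF x xF cauchy) => y yF hy.
have hy1 : val_ge v (y - 1) d.
  case: (hy d) => M hM.
  have -> : y - 1 = (x M - 1) - (x M - y) by ring.
  by apply: (vge_sub hv); [exact: (inv M).1|exact: hM M (leqnn M)].
exists y => //; split => //.
apply/eqP; rewrite -subr_eq0; apply/eqP; apply: vge_eq0 => r.
case: (hy r) => M1 hM1; case: (archi_rat r d0) => M2 hM2.
pose k := maxn M1 M2.
have -> : y ^+ e - u = - (x k ^+ e - y ^+ e) - (u - x k ^+ e) by ring.
apply: (vge_sub hv); first apply: (vge_opp hv).
  apply: diffX; first exact: integ (ltW d0) (inv k).1.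
    exact: integ (ltW d0) hy1.
  exact: hM1 k (leq_maxl _ _).
apply: vge_le (inv k).2 _; apply: le_trans hM2 _; apply: ler_wpM2r; [exact: ltW|rewrite ler_nat].
exact: leqW (leq_maxr _ _).
Qed.
End Hensel.
Section Compl.
Variables (K : fieldType) (E : fieldExtType K) (v : E -> rat).
Hypothesis hv : is_valuation v.
Hypothesis hZ : forall a : K, a != 0 -> exists z : int, v (a%:A) = z%:~R.
Hypothesis hK : forall u : nat -> K, v_cauchy v (fun i => (u i)%:A) ->
          exists l : K, v_converges_to v (fun i => (u i)%:A) l%:A.

Lemma complete1 : complete_in v (1%AS : {subfield E}).
Proof.
move=> u hu hc.
have hb : forall i, exists k : K, u i = k%:A by move=> i; apply/vlineP; exact: hu.
pose b i := proj1_sig (constructive_indefinite_description _ (hb i)).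
have ub : forall i, u i = (b i)%:A by move=> i; exact: (proj2_sig (constructive_indefinite_description _ (hb i))).
have hc' : v_cauchy v (fun i => (b i)%:A) by move=> r; case: (hc r) => M hM; exists M => i j hi hj; rewrite -!ub; exact: hM.
case: (hK hc') => l hl; exists l%:A; first by apply/vlineP; exists l.
by move=> r; case: (hl r) => M hM; exists M => i hi; rewrite ub; exact: hM.
Qed.

Lemma completeL (L : {subfield E}) (w : E) (N : nat) : (0 < N)%N -> w != 0 -> v w = N%:R^-1 ->
  w \in L -> \dim L = N -> complete_in v L.
Proof.
move=> N0 nw vw wL dL u hu hc.
have bas := basis_pow hv hZ N0 nw vw wL dL.
set X := powt w N in bas.
pose c k j := coord X j (u k).
have hcj : forall j, exists l : K, v_converges_to v (fun k => (c k j)%:A) l%:A.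
  move=> j; apply: hK => r; case: (hc (r + 1)) => M hM; exists M => i k hi hk.
  have := coord_bound hv hZ N0 nw vw j wL dL (rpredB (hu i) (hu k)) (hM i k hi hk).
  by rewrite raddfB /= scalerBl addrK.
pose l j := proj1_sig (constructive_indefinite_description _ (hcj j)).
have hl : forall j, v_converges_to v (fun k => (c k j)%:A) (l j)%:A.
  by move=> j; exact: (proj2_sig (constructive_indefinite_description _ (hcj j))).
have wint : forall j : 'I_N, val_ge v X`_j 0.
  move=> j; rewrite powt_nth; right; rewrite vX // vw; apply: mulr_ge0 => //.
  by rewrite invr_ge0.
exists (\sum_j l j *: X`_j).
  by apply: rpred_sum => j _; rewrite rpredZ // powt_nth rpredX.
move=> r.
have hM : forall j : 'I_N, exists M, forall k, (M <= k)%N -> val_ge v ((c k j)%:A - (l j)%:A) r.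
  by move=> j; exact: hl.
pose M j := proj1_sig (constructive_indefinite_description _ (hM j)).
have hMj : forall j k, (M j <= k)%N -> val_ge v ((c k j)%:A - (l j)%:A) r.
  by move=> j; exact: (proj2_sig (constructive_indefinite_description _ (hM j))).
exists (\max_j M j) => k hk.
rewrite {1}(coord_basis bas (hu k)) -sumrB.
apply: (vge_sum hv) => j _; rewrite -scalerBl -mulr_algl.
have := vge_mul hv (hMj j k (leq_trans (leq_bigmax j) hk)) (wint j).
by rewrite addr0 scalerBl.
Qed.
End Compl.
Section PSalg.
Variable K : fieldType.

Lemma coef0X (P : {poly K}) k : (P ^+ k)`_0 = P`_0 ^+ k.
Proof. elim: k => [|k ih]; first by rewrite !expr0 coef1. by rewrite !exprS coef0M ih. Qed.

Lemma psA (P : {poly K}) e k : ps_exp (fun i => P`_i) e k = (P ^+ e)`_k.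
Proof.
elim: e k => [|e ih] k; first by rewrite expr0 coef1.
rewrite exprS coefM /ps_exp /= /ps_mul; apply: eq_bigr => i _.
by rewrite -ih.
Qed.

Lemma psB (f g : nat -> K) e k : (forall i, (i <= k)%N -> f i = g i) ->
  ps_exp f e k = ps_exp g e k.
Proof.
elim: e k => [|e ih] k hfg //.
rewrite /ps_exp /= /ps_mul; apply: eq_bigr => i _.
rewrite hfg; last by rewrite -ltnS.
congr (_ * _); apply: ih => j hj; apply: hfg; apply: leq_trans hj _; exact: leq_subr.
Qed.

Lemma psp_block (F : nat -> K) e J (R : comNzRingType) (f : K -> R) (x : R) :
  (0 < e)%N -> f 0 = 0 ->
  \sum_(k < e * J) f (ps_subst_pow F e k) * x ^+ k = \sum_(j < J) f (F j) * (x ^+ e) ^+ j.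
Proof.
case: e => // e' _ f0; elim: J => [|J ih]; first by rewrite muln0 !big_ord0.
rewrite mulnS addnC big_split_ord /= ih [RHS]big_ord_recr /=; congr (_ + _).
rewrite big_ord_recl big1 ?addr0.
  rewrite /ps_subst_pow /= addn0 dvdn_mulr // mulKn // -exprM mulnC //.
move=> i _; rewrite /ps_subst_pow /=.
have : ~~ (e'.+1 %| e'.+1 * J + i.+1)%N.
  rewrite dvdn_addr ?dvdn_mulr //; apply/negP => /dvdn_leq; move/(_ isT).
  have := ltn_ord i; lia.
by move/negbTE => ->; rewrite f0 mul0r.
Qed.
End PSalg.
Section PSroot.
Variables (K : fieldType) (F : nat -> K) (e n : nat) (c : K).
Hypotheses (e0 : (0 < e)%N) (hc : c ^+ e = F n) (hd : e%:R * c ^+ e.-1 != 0)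
  (hF : forall i, (i < n)%N -> F i = 0).

Definition Hs m := ps_subst_pow F e (n * e + m).
Definition gs (Q : {poly K}) k := (Hs k.+1 - (Q ^+ e)`_k.+1) / (e%:R * c ^+ e.-1).
Fixpoint Qs k : {poly K} :=
  if k is k'.+1 then Qs k' + gs (Qs k') k' *: 'X^(k'.+1) else c%:P.

Lemma Qs_size k : (size (Qs k) <= k.+1)%N.
Proof.
elim: k => [|k ih] /=; first by rewrite size_polyC; case: (c != 0).
apply: leq_trans (size_polyD _ _) _; rewrite geq_max (leq_trans ih) //=.
by apply: leq_trans (size_scale_leq _ _) _; rewrite size_polyXn.
Qed.

Lemma Qs_hi k m : (k < m)%N -> (Qs k)`_m = 0.
Proof. move=> h; apply: nth_default; exact: leq_trans (Qs_size k) h. Qed.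

Lemma Qs_stable k m : (m <= k)%N -> (Qs k)`_m = (Qs m)`_m.
Proof.
move=> /subnK <-; elim: (k - m)%N => [|d ih] //.
rewrite addSn /= coefD coefZ coefXn ih.
by rewrite (_ : (m == (d + m).+1) = false) ?mulr0 ?addr0 //; apply/negbTE; rewrite neq_ltn ltnS leq_addl.
Qed.

Lemma Qs_0 k : (Qs k)`_0 = c.
Proof. elim: k => [|k ih] /=; first by rewrite coefC. by rewrite coefD coefZ coefXn mulr0 addr0. Qed.

Lemma Qs_last k : (Qs k.+1)`_k.+1 = gs (Qs k) k.
Proof. by rewrite /= coefD coefZ coefXn eqxx mulr1 Qs_hi // add0r. Qed.

Lemma Qs_pow k m : (m <= k)%N -> (Qs k ^+ e)`_m = Hs m.
Proof.
elim: k m => [|k ih] m hm.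
  move: hm; rewrite leqn0 => /eqP ->.
  by rewrite /= coef0X coefC /= hc /Hs /ps_subst_pow addn0 dvdn_mull // mulnK.
set Q := Qs k; set g := gs Q k.
have hQ' : Qs k.+1 = Q + g *: 'X^(k.+1) by [].
have hdiff : Qs k.+1 ^+ e = Q ^+ e + g *: ('X^(k.+1) *
   \sum_(i < e) Qs k.+1 ^+ (e.-1 - i) * Q ^+ i).
  have hd2 : Qs k.+1 - Q = g *: 'X^(k.+1) by rewrite hQ' [Q + _]addrC addrK.
  by rewrite scalerAl -hd2 -subrXX addrC subrK.
rewrite hdiff coefD coefZ coefXnM.
move: hm; rewrite leq_eqVlt => /orP [/eqP ->|hm]; last first.
  by rewrite hm mulr0 addr0 ih.
rewrite ltnn subnn coef_sum.
have -> : \sum_(i < e) (Qs k.+1 ^+ (e.-1 - i) * Q ^+ i)`_0 = e%:R * c ^+ e.-1.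
  rewrite (eq_bigr (fun=> c ^+ e.-1)); first by rewrite sumr_const card_ord mulr_natl.
  move=> i _; rewrite coef0M !coef0X Qs_0 /Q Qs_0 -exprD subnK //.
  by rewrite -ltnS prednK.
by rewrite /g /gs divfK // addrC subrK.
Qed.

Definition Fes i := if (i < n)%N then 0 else (Qs (i - n))`_(i - n).
Definition Ps N := 'X^n * Qs N.

Lemma Ps_coef N i : (i <= n + N)%N -> (Ps N)`_i = Fes i.
Proof.
move=> hi; rewrite /Ps coefXnM /Fes; case: ifP => // _.
by rewrite Qs_stable // leq_subLR.
Qed.

Lemma Fes_root k : ps_exp Fes e k = ps_subst_pow F e k.
Proof.
rewrite (@psB K _ (fun i => (Ps k)`_i)); last first.
  by move=> i hi; rewrite Ps_coef // (leq_trans hi) // leq_addl.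
rewrite psA /Ps exprMn -exprM coefXnM.
case: ifP => hk.
  rewrite /ps_subst_pow; case: ifP => // _; rewrite hF //.
  by rewrite ltn_divLR // mulnC.
rewrite Qs_pow ?leq_subr // /Hs subnKC //.
by rewrite leqNgt hk.
Qed.
End PSroot.
Section Misc.
Variables (K : fieldType) (E : fieldExtType K) (v : E -> rat).
Hypothesis hv : is_valuation v.

Lemma nat_int m : val_ge v (m%:R : E) 0.
Proof.
elim: m => [|m ih]; first by left.
by rewrite -addn1 natrD; apply: (vge_add hv) => //; exact: vge_1.
Qed.

Lemma vgt_ge x : val_gt v x 0 -> exists2 d, 0 < d & val_ge v x d.
Proof.
case=> [->|h]; first by exists 1 => //; left.
by exists (v x) => //; right.
Qed.

Lemma ve0 (e p : nat) : (0 < e)%N -> coprime e p -> val_gt v (p%:R : E) 0 ->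
  (e%:R : E) != 0 /\ v e%:R = 0.
Proof.
move=> e0 cop hp.
case: (egcdnP p e0) => km kn hk _.
move: cop; rewrite /coprime => /eqP g1; rewrite g1 in hk.
have h1 : (1 : E) = e%:R * km%:R - p%:R * kn%:R.
  have h : ((km * e)%:R : E) = (kn * p + 1)%:R by rewrite hk.
  by move: h; rewrite !natrM natrD => h; rewrite mulrC h; ring.
have key : (e%:R : E) = 0 \/ 0 < v e%:R -> False.
  move=> hh.
  have h2 : val_gt v ((e%:R : E) * km%:R) 0.
    case: hh => [->|hh]; first by rewrite mul0r; left.
    have := vge_mul hv (vge_exact v (e%:R : E)) (nat_int km); rewrite addr0.
    by move/vge_gt => /(_ _ hh).
  have h3 : val_gt v ((p%:R : E) * kn%:R) 0.
    case: (vgt_ge hp) => d d0 hd.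
    have := vge_mul hv hd (nat_int kn); rewrite addr0.
    by move/vge_gt => /(_ _ d0).
  case: (vgt_ge h2) => d2 d20 hd2; case: (vgt_ge h3) => d3 d30 hd3.
  have m2 : Num.min d2 d3 <= d2 by rewrite ge_min lexx.
  have m3 : Num.min d2 d3 <= d3 by rewrite ge_min lexx orbT.
  have := vge_sub hv (vge_le hd2 m2) (vge_le hd3 m3).
  rewrite -h1; case=> [|h4]; first by apply/eqP; exact: oner_neq0.
  move: h4; rewrite v1 // => h4.
  have : 0 < Num.min d2 d3 by rewrite lt_min d20 d30.
  lra.
have ne : (e%:R : E) != 0 by apply/eqP => h0; apply: key; left.
split => //.
case: (nat_int e) => [h0|hge]; first by move: ne; rewrite h0 eqxx.
apply/eqP; rewrite eq_le hge andbT leNgt; apply/negP => hlt.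
by apply: key; right.
Qed.

Lemma unit1 y d : val_ge v (y - 1) d -> 0 < d -> y != 0 /\ v y = 0.
Proof.
move=> hy d0.
have ny : y != 0.
  apply/eqP => y0; move: hy; rewrite y0 sub0r; case=> [/eqP|]; first by rewrite oppr_eq0 oner_eq0.
  by rewrite vN1 //; lra.
split => //.
have [y1|n1] := eqVneq (y - 1) 0.
  by move/eqP: y1; rewrite subr_eq0 => /eqP ->; rewrite v1.
have -> : y = 1 + (y - 1) by rewrite addrC subrK.
case: hy => [h|h]; first by move: n1; rewrite h eqxx.
rewrite v_strict // ?oner_neq0 ?v1 //; lra.
Qed.

Lemma adj_deg (F : {subfield E}) x e c : (0 < e)%N -> c \in F -> x ^+ e = c ->
  (adjoin_degree F x <= e)%N.
Proof.
move=> e0 cF hx.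
have hp : 'X^e - c%:P \is a polyOver F by rewrite polyOverXnsubC.
have hr : root ('X^e - c%:P) x by rewrite /root !hornerE hx subrr.
have := dvdp_leq (monic_neq0 (monicXnsubC c e0)) (minPoly_dvdp hp hr).
by rewrite size_minPoly size_XnsubC.
Qed.
End Misc.
Lemma rat_ineq (n e : nat) : (0 < n)%N -> (0 < e)%N ->
  (n.+1)%:R * (n * e)%:R^-1 <= e%:R^-1 + n%:R^-1 :> rat.
Proof.
move=> n0 e0.
have hn : (1 : rat) <= n%:R by rewrite ler1n.
have he : (1 : rat) <= e%:R by rewrite ler1n.
have -> : (n.+1)%:R * (n * e)%:R^-1 = e%:R^-1 + (n%:R * e%:R)^-1 :> rat.
  rewrite natrM -addn1 natrD; field; by rewrite !pnatr_eq0 -!lt0n e0 n0.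
rewrite lerD2l invfM -[X in _ <= X]mulr1 ler_wpM2l ?invr_ge0 //.
by rewrite invf_le1 ?ltr0n.
Qed.
Section AlgMor.
Variables (K : fieldType) (E : fieldExtType K).
Lemma alg_div (a b : K) : (a / b)%:A = a%:A / (b%:A : E).
Proof. by rewrite -[LHS]/(in_alg E (a/b)) fmorph_div. Qed.
Lemma alg_mul (a b : K) : (a * b)%:A = a%:A * (b%:A : E).
Proof. by rewrite -[LHS]/(in_alg E (a*b)) rmorphM. Qed.
Lemma alg_exp (a : K) k : (a ^+ k)%:A = (a%:A : E) ^+ k.
Proof. by rewrite -[LHS]/(in_alg E (a ^+ k)) rmorphXn. Qed.
Lemma alg_nat m : (m%:R : K)%:A = m%:R :> E.
Proof. by rewrite -[LHS]/(in_alg E _) rmorph_nat. Qed.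
Lemma alg_sub (a b : K) : (a - b)%:A = a%:A - (b%:A : E).
Proof. by rewrite scalerBl. Qed.
Lemma alg_sum I r (P : pred I) (f : I -> K) :
  (\sum_(i <- r | P i) f i)%:A = \sum_(i <- r | P i) (f i)%:A :> E.
Proof. by rewrite -[LHS]/(in_alg E _) rmorph_sum. Qed.
Lemma alg_inj (a b : K) : a%:A = b%:A :> E -> a = b.
Proof. exact: (fmorph_inj (in_alg E)). Qed.
End AlgMor.

Section Int.
Variables (K : fieldType) (E : fieldExtType K) (v : E -> rat).
Hypothesis hv : is_valuation v.

Lemma int_pow (P : {poly K}) k i : (forall j, val_ge v (P`_j)%:A 0) ->
  val_ge v ((P ^+ k)`_i)%:A 0.
Proof.
move=> hP; elim: k i => [|k ih] i.
  by rewrite expr0 coef1 alg_nat; exact: nat_int.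
rewrite exprS coefM alg_sum; apply: (vge_sum hv) => j _.
by rewrite alg_mul; apply: integ_mul.
Qed.
End Int.
Section Part3.
Variables (K : fieldType) (E : fieldExtType K) (v : E -> rat).
Hypothesis hv : is_valuation v.
Hypothesis hZ : forall a : K, a != 0 -> exists z : int, v (a%:A) = z%:~R.
Hypothesis hK : forall u : nat -> K, v_cauchy v (fun i => (u i)%:A) ->
          exists l : K, v_converges_to v (fun i => (u i)%:A) l%:A.
Variables (n e : nat) (piL piLe piKe : E) (piK : K).
Hypotheses (n0 : (0 < n)%N) (e0 : (0 < e)%N) (neE : (e%:R : E) != 0) (veE : v e%:R = 0)
  (npiL : piL != 0) (vpiL : v piL = n%:R^-1) (hLe : piLe ^+ e = piL)
  (npiLe : piLe != 0) (vpiLe : v piLe = (n * e)%:R^-1)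
  (npiKe : piKe != 0) (vpiKe : v piKe = e%:R^-1) (hKe : piKe ^+ e = piK%:A)
  (hcg : val_ge v (piLe ^+ n - piKe) (e%:R^-1 + n%:R^-1))
  (hcK : val_ge v (piK%:A - piL ^+ n) ((n.+1)%:R / n%:R)).

Lemma part3 (F : nat -> K) :
  (forall i, (i < n)%N -> F i = 0) ->
  (forall i, val_ge v (F i)%:A 0) ->
  v_series_to v (fun i => (F i)%:A * piL ^+ i) piK%:A ->
  exists Fe : nat -> K,
    [/\ forall i, val_ge v (Fe i)%:A 0,
        ps_exp Fe e = ps_subst_pow F e &
        v_series_to v (fun i => (Fe i)%:A * piLe ^+ i) piKe].
Proof.
move=> hF0 hFint hFser.
have nR : (n%:R : rat) != 0 by rewrite pnatr_eq0 -lt0n.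
have eR : (e%:R : rat) != 0 by rewrite pnatr_eq0 -lt0n.
have nposR : (0 : rat) < n%:R^-1 by rewrite invr_gt0 ltr0n.
have vterm : forall (x : E) (a : K) i, x != 0 -> val_ge v a%:A 0 ->
    val_ge v (a%:A * x ^+ i) (i%:R * v x).
  move=> x a i nx ha; have := vge_mul hv ha (vge_exact v (x ^+ i)).
  by rewrite add0r vX.
have hFn : val_ge v ((F n)%:A - 1) n%:R^-1.
  case: (hFser ((n.+1)%:R / n%:R)) => M0 hM0.
  set N := maxn M0 n.+1.
  have hnN : (n < N)%N by rewrite leq_max leqnn orbT.
  have := hM0 N (leq_maxl _ _).
  rewrite (bigD1 (Ordinal hnN)) //= => hS.
  set R := \sum_(i < N | i != Ordinal hnN) _ in hS.
  have hR : val_ge v R ((n.+1)%:R / n%:R).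
    apply: (vge_sum hv) => i hi.
    have [hin|hin] := ltnP i n; first by rewrite hF0 // scale0r mul0r; left.
    have hin' : (n < i)%N.
      by rewrite ltn_neqAle hin andbT eq_sym; move: hi; apply: contra => /eqP h; apply/eqP/val_inj.
    apply: vge_le (vterm _ _ i npiL (hFint i)) _.
    rewrite vpiL ler_wpM2r ?invr_ge0 ?ler0n // ler_nat //.
  have h1 : ((F n)%:A - 1) * piL ^+ n =
     ((F n)%:A * piL ^+ n + R - piK%:A) - R + (piK%:A - piL ^+ n) by ring.
  have h2 : val_ge v (((F n)%:A - 1) * piL ^+ n) ((n.+1)%:R / n%:R).
    by rewrite h1; apply: (vge_add hv); [apply: (vge_sub hv)|].
  have := vge_div hv h2 (expf_neq0 n npiL); rewrite mulfK ?expf_neq0 // vX // vpiL.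
  move=> h3; apply: vge_le h3 _.
  rewrite le_eqVlt; apply/orP; left; apply/eqP; rewrite -addn1 natrD; field; by rewrite nR.
have c1 := @complete1 K E v hK.
have FnK : (F n)%:A \in (1%AS : {subfield E}) by apply/vlineP; exists (F n).
case: (Hensel hv c1 neE veE FnK nposR hFn) => x x1 [hxe hx1].
case/vlineP: x1 => c hxc.
have hxc' : x = c%:A by [].
rewrite hxc' in hxe hx1.
have hc : c ^+ e = F n by apply: (alg_inj (E := E)); rewrite alg_exp.
case: (unit1 hv hx1 nposR) => nc vc.
have cint : val_ge v c%:A 0 := integ hv (ltW nposR) hx1.
set dK := e%:R * c ^+ e.-1.
have hdA : dK%:A = e%:R * (c%:A) ^+ e.-1 :> E by rewrite alg_mul alg_nat alg_exp.
have ndA : dK%:A != 0 :> E by rewrite hdA mulf_neq0 ?expf_neq0.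
have hd : dK != 0 by apply: contraNneq ndA => ->; rewrite scale0r.
have vd : v dK%:A = 0 by rewrite hdA vM ?expf_neq0 // veE vX // vc mulr0 addr0.
have intQ : forall m k, val_ge v ((Qs F e n c k)`_m)%:A 0.
  elim/ltn_ind => m ih k.
  have [hkm|hmk] := ltnP k m; first by rewrite Qs_hi // scale0r; left.
  rewrite Qs_stable //.
  case: m ih {hmk} => [|j] ih; first by rewrite Qs_0.
  rewrite Qs_last /gs alg_div.
  have hnum : val_ge v ((Hs F e n j.+1 - (Qs F e n c j ^+ e)`_j.+1)%:A) 0.
    rewrite alg_sub; apply: (vge_sub hv).
      rewrite /Hs /ps_subst_pow; case: ifP => _; [exact: hFint| by rewrite scale0r; left].
    apply: int_pow => // i.
    have [hij|hji] := leqP i j; first by apply: ih; rewrite ltnS.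
    by rewrite Qs_hi // scale0r; left.
  by have := vge_div hv hnum ndA; rewrite vd subr0.
set Fe := Fes F e n c.
have Feint : forall i, val_ge v (Fe i)%:A 0.
  by move=> i; rewrite /Fe /Fes; case: ifP => _; [rewrite scale0r; left| exact: intQ].
have Froot : ps_exp Fe e = ps_subst_pow F e.
  by apply: functional_extensionality => k; exact: (Fes_root e0 hc hd hF0 k).
exists Fe; split => //.
move=> r0; set r := r0 + 1.
case: (hFser r) => M0 hM0.
case: (archi_rat r nposR) => J0 hJ0.
set J1 := maxn M0 J0.
exists (maxn n.+1 (J1 * e)) => M hM.
have hM1 : (n.+1 <= M)%N by apply: leq_trans hM; exact: leq_maxl.
have hM2 : (J1 * e <= M)%N by apply: leq_trans hM; exact: leq_maxr.
set N := (M - n.+1)%N.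
have hMN : M = (n + N).+1 by rewrite /N -addSn subnKC.
set s := \sum_(i < M) (Fe i)%:A * piLe ^+ i.
set P := Ps F e n c N.
pose mapE (p : {poly K}) := map_poly (in_alg E) p.
have sizeP : (size P <= M)%N.
  apply: leq_trans (size_polyMleq _ _) _; rewrite size_polyXn hMN.
  have := Qs_size F e n c N; lia.
have hsP : s = (mapE P).[piLe].
  rewrite (@horner_coef_wide _ M) ?size_map_poly //; apply: eq_bigr => i _.
  by rewrite coef_map /= Ps_coef // -ltnS -hMN ltn_ord.
set Q := Qs F e n c N.
set q := (mapE Q).[piLe].
have hsq : s = piLe ^+ n * q by rewrite hsP /P /Ps /mapE rmorphM /= map_polyXn hornerM hornerXn.
have hq : val_ge v (q - c%:A) (n * e)%:R^-1.
  rewrite /q (@horner_coef_wide _ N.+1) ?size_map_poly ?Qs_size // big_ord_recl /=.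
  rewrite coef_map /= Qs_0 expr0 mulr1 [_ + \sum_(_ < _) _]addrC addrK.
  apply: (vge_sum hv) => i _; rewrite coef_map /=.
  apply: vge_le (vterm _ _ _ npiLe (intQ _ _)) _; rewrite vpiLe.
  by rewrite ler_peMl ?invr_ge0 ?ler0n // ler1n.
have hsK : val_ge v (s - piKe) ((n.+1)%:R * (n * e)%:R^-1).
  have -> : s - piKe = piLe ^+ n * (q - c%:A) + (piLe ^+ n - piKe) * c%:A + piKe * (c%:A - 1).
    by rewrite hsq; ring.
  have ri := rat_ineq n0 e0.
  apply: (vge_add hv); first apply: (vge_add hv).
  - have := vge_mul hv (vge_exact v (piLe ^+ n)) hq; rewrite vX // vpiLe.
    by rewrite -[n.+1]addn1 natrD mulrDl mul1r.
  - have := vge_mul hv hcg cint; rewrite addr0 => h; exact: vge_le h ri.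
  - have := vge_mul hv (vge_exact v piKe) hx1; rewrite vpiKe => h; exact: vge_le h ri.
have Pint : forall j, val_ge v (P`_j)%:A 0.
  by move=> j; rewrite /P /Ps coefXnM; case: ifP => _; [rewrite scale0r; left| exact: intQ].
set R := P ^+ e.
set J := (M %/ e)%N.
have hJM : (J * e <= M)%N by apply: leq_trunc_div.
have hJ : (J1 <= J)%N by rewrite leq_divRL.
have hse : s ^+ e = (mapE R).[piLe] by rewrite hsP /R /mapE rmorphXn /= horner_exp.
have sizeR : (size (mapE R) <= e * J + size R)%N by rewrite size_map_poly leq_addl.
rewrite (horner_coef_wide _ sizeR) big_split_ord /= in hse.
have hs1 : \sum_(i < e * J) (mapE R)`_i * piLe ^+ i = \sum_(j < J) (F j)%:A * piL ^+ j.
  rewrite -hLe.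
  have <- : \sum_(k < e * J) in_alg E (ps_subst_pow F e k) * piLe ^+ k =
            \sum_(j < J) in_alg E (F j) * (piLe ^+ e) ^+ j.
    by apply: psp_block => //; rewrite /= scale0r.
  apply: eq_bigr => i _; rewrite coef_map /= /R -psA -Froot.
  congr (_ *: _ * _); apply: psB => j hj; rewrite Ps_coef //.
  have hJM' : (e * J <= M)%N by rewrite mulnC.
  have hi := ltn_ord i; move: hJM' hMN hj hi; clear; lia.
rewrite hs1 in hse.
set S2 := \sum_(i < size R) _ in hse.
have hS2 : val_ge v S2 ((e * J)%:R * (n * e)%:R^-1).
  apply: (vge_sum hv) => i _; rewrite coef_map /=.
  apply: vge_le (vterm _ _ _ npiLe (int_pow hv _ _ Pint)) _; rewrite vpiLe.
  by rewrite ler_wpM2r ?invr_ge0 ?ler0n // ler_nat leq_addr.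
have hS1 : val_ge v (\sum_(j < J) (F j)%:A * piL ^+ j - piK%:A) r.
  by apply: hM0; apply: leq_trans hJ; apply: leq_maxl.
have hJr : r <= (e * J)%:R * (n * e)%:R^-1.
  have -> : ((e * J)%:R * (n * e)%:R^-1 : rat) = J%:R * n%:R^-1.
    by rewrite !natrM; field; rewrite ?nR ?eR.
  apply: le_trans hJ0 _; apply: ler_wpM2r; first by rewrite invr_ge0 ler0n.
  by rewrite ler_nat; apply: leq_trans hJ; apply: leq_maxr.
have hsE : val_ge v (s ^+ e - piK%:A) r.
  rewrite hse; have -> : forall a b c : E, a + b - c = (a - c) + b by move=> *; ring.
  by apply: (vge_add hv) => //; apply: vge_le hS2 hJr.
set t := s / piKe.
have hst : s = piKe * t by rewrite /t mulrC divfK.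
have dpos : (0 : rat) < (n * e)%:R^-1 by rewrite invr_gt0 ltr0n muln_gt0 n0 e0.
have ht1 : val_ge v (t - 1) (n * e)%:R^-1.
  have -> : t - 1 = (s - piKe) / piKe by rewrite /t; field.
  have := vge_div hv hsK npiKe; rewrite vpiKe => h; apply: vge_le h _.
  rewrite le_eqVlt; apply/orP; left; apply/eqP; rewrite !natrM -addn1 natrD.
  by field; rewrite ?nR ?eR.
set Sg := \sum_(i < e) t ^+ i.
have hSg : val_ge v (Sg / e%:R - 1) (n * e)%:R^-1.
  have -> : Sg / e%:R - 1 = (Sg - e%:R) / e%:R by field.
  have h : val_ge v (Sg - e%:R) (n * e)%:R^-1.
    have -> : (e%:R : E) = \sum_(i < e) 1 by rewrite sumr_const card_ord.
    rewrite /Sg -sumrB.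
    apply: (vge_sum hv) => i _; exact: one_X hv _ _ _ (ltW dpos) ht1.
  by have := vge_div hv h neE; rewrite veE subr0.
case: (unit1 hv hSg dpos) => nSg vSg.
have nSg' : Sg != 0 by apply: contraNneq nSg => ->; rewrite mul0r.
have vSg' : v Sg = 0.
  have -> : Sg = Sg / e%:R * e%:R by rewrite divfK.
  by rewrite vM // vSg veE addr0.
have npiKA : piK%:A != 0 :> E by rewrite -hKe expf_neq0.
have hid : t - 1 = (s ^+ e - piK%:A) / (piK%:A * Sg).
  have -> : s ^+ e - piK%:A = piK%:A * ((t - 1) * Sg).
    by rewrite -subrX1 hst exprMn hKe; ring.
  by field; rewrite nSg' npiKA.
have vpiK : v piK%:A = 1 by rewrite -hKe vX // vpiKe divff.
have := vge_div hv hsE (mulf_neq0 npiKA nSg'); rewrite vM // vSg' vpiK addr0 -hid => h2.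
have := vge_mul hv (vge_exact v piKe) h2; rewrite vpiKe => h.
have -> : s - piKe = piKe * (t - 1) by rewrite {1}hst; ring.
apply: vge_le h _; have : (0 : rat) <= e%:R^-1 by rewrite invr_ge0 ler0n.
rewrite /r; lra.
Qed.
End Part3.
Unset Implicit Arguments.
Theorem lemma2p8 (p : nat) (K : fieldType) (E : fieldExtType K) (v : E -> rat)
  (L : {subfield E}) (n : nat) (piL : E) (piK : K) (e : nat) (piKe : E) :
  prime p ->
  complete_dvf_perfect_residue v p ->
  separable 1%VS L ->
  \dim L = n -> (1 < n)%N ->
  totally_ramified v 1%AS L n ->
  uniformizer v L piL ->
  uniformizer v 1%AS piK%:A ->
  congr_mod v L piK%:A (piL ^+ n) (piL ^+ n.+1) ->
  (1 <= e)%N -> coprime e (p * n) ->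
  piKe ^+ e = piK%:A ->
  let Ke : {subfield E} := <<1%AS; piKe>>%AS in
  let Le : {subfield E} := (L * Ke)%AS in
  (totally_ramified v 1%AS Ke e /\ totally_ramified v L Le e) /\
  exists piLe : E,
    [/\ uniformizer v Le piLe, piLe ^+ e = piL,
        congr_mod v Le (piLe ^+ n) piKe (piLe ^+ n.+1) &
        forall F : nat -> K,
          (forall i, (i < n)%N -> F i = 0) ->
          (forall i, val_ge v (F i)%:A 0) ->
          v_series_to v (fun i => (F i)%:A * piL ^+ i) piK%:A ->
          exists Fe : nat -> K,
            [/\ forall i, val_ge v (Fe i)%:A 0,
                ps_exp Fe e = ps_subst_pow F e &
                v_series_to v (fun i => (Fe i)%:A * piLe ^+ i) piKe]].
Proof.
move=> hp [hv [hZ hone] hK hpv hres] _ hdim hn htr hpiL hpiK hcong e0 hcop hKe Ke Le.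
have n0 : (0 < n)%N by apply: ltnW.
have nR : (n%:R : rat) != 0 by rewrite pnatr_eq0 -lt0n.
have eR : (e%:R : rat) != 0 by rewrite pnatr_eq0 -lt0n.
case: (hpiK) => _ npiK vpiK0 hdivK.
have vpiK : v piK%:A = 1.
  case: hone => a [na va].
  have aF : a%:A \in (1%AS : {subfield E}) by apply/vlineP; exists a.
  have ha : val_gt v a%:A 0 by right; rewrite va ltr01.
  case: (hdivK _ aF ha) => z zF [hz az].
  have nz : z != 0.
    by apply/eqP => z0; move: (alg_neq0 E na); rewrite az z0 mulr0 eqxx.
  have npiK' : piK != 0 by apply/eqP => h0; move: npiK; rewrite h0 scale0r eqxx.
  case: (hZ _ npiK') => k hk.
  case: hz => [z0|hz]; first by move: nz; rewrite z0 eqxx.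
  have h1 : (k%:~R : rat) <= (1 : int)%:~R by rewrite -hk -va az vM // lerDl.
  have h2 : ((0:int)%:~R : rat) < k%:~R by rewrite -hk.
  rewrite ler_int in h1; rewrite ltr_int in h2.
  by rewrite hk (_ : k = 1) //; lia.
have npiK' : piK != 0 by apply/eqP => h0; move: npiK; rewrite h0 scale0r eqxx.
case: (hpiL) => piLL npiL vpiL0 _.
have vpiL : v piL = n%:R^-1.
  case: htr => _ _ [pi1 [pi2 [u1 u2 h12]]].
  rewrite (unif_val hv u2 hpiL) (unif_val hv u1 hpiK) vpiK in h12.
  by apply: (mulfI nR); rewrite -h12 divff.
have [neE veE] : (e%:R : E) != 0 /\ v e%:R = 0.
  by apply: ve0 hpv => //; move: hcop; rewrite coprimeMr => /andP [].
case: hcong => z0 z0L [hz0 hz0e].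
have npiLn : piL ^+ n != 0 by rewrite expf_neq0.
set u := piK%:A / piL ^+ n.
have piKL : piK%:A \in L by rewrite rpredZ // mem1v.
have uL : u \in L by rewrite rpredM ?rpredV ?rpredX.
have hu : piK%:A = u * piL ^+ n by rewrite /u divfK.
have hu1 : val_ge v (u - 1) n%:R^-1.
  have -> : u - 1 = piL * z0.
    apply: (mulIf npiLn); rewrite mulrBl -hu mul1r hz0e exprS; ring.
  by have := vge_mul hv (vge_exact v piL) hz0; rewrite addr0 vpiL.
have cL := completeL hv hZ hK n0 npiL vpiL piLL hdim.
have nposR : (0 : rat) < n%:R^-1 by rewrite invr_gt0 ltr0n.
case: (Hensel hv cL neE veE uL nposR hu1) => y yL [hye hy1].
case: (unit1 hv hy1 nposR) => ny vy.
have nu : u != 0 by rewrite -hye expf_neq0.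
case: (egcdnP e n0) => a b hab _.
have hab' : (a * n = b * e + 1)%N.
  have g1 : gcdn n e = 1%N by move: hcop; rewrite coprimeMr => /andP [_]; rewrite /coprime gcdnC => /eqP.
  by rewrite hab g1.
have npiKe : piKe != 0.
  apply/eqP => h0; move: npiK; rewrite -hKe h0 expr0n eqn0Ngt e0 /=; by rewrite eqxx.
set piLe := piKe ^+ a / (y ^+ a * piL ^+ b).
have hLe : piLe ^+ e = piL.
  have E1 : forall x : E, (x ^+ a) ^+ e = (x ^+ e) ^+ a by move=> x; rewrite -!exprM mulnC.
  rewrite /piLe expr_div_n exprMn !E1 hKe hye hu exprMn -!exprM [(n * a)%N]mulnC hab' exprD expr1.
  field.
  by rewrite !expf_neq0.
have hLen : piLe ^+ n = piKe / y.
  rewrite /piLe expr_div_n exprMn -!exprM hab' !exprD !expr1 [(b * e)%N]mulnC !exprM hKe hye.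
  rewrite -exprM mulnC exprM hu exprMn.
  field.
  by rewrite ny !expf_neq0.
have vpiKe : v piKe = e%:R^-1.
  have := vX hv e npiKe; rewrite hKe vpiK => h.
  by apply: (mulfI eR); rewrite -h divff.
have npiLe : piLe != 0 by apply/eqP => h0; move: npiL; rewrite -hLe h0 expr0n eqn0Ngt e0 /= eqxx.
have neR : ((n * e)%:R : rat) != 0 by rewrite natrM mulf_neq0.
have vpiLe : v piLe = (n * e)%:R^-1.
  have := vX hv e npiLe; rewrite hLe vpiL natrM => h.
  rewrite invfM; apply: (mulfI eR); rewrite -h; field; by rewrite ?eR ?nR.
have ne0 : (0 < n * e)%N by rewrite muln_gt0 n0.
have KeLe : (Ke <= Le)%VS by apply: field_subvMl.
have LLe : (L <= Le)%VS by apply: field_subvMr.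
have piKeKe : piKe \in Ke by apply: memv_adjoin.
have piKeLe : piKe \in Le by apply: (subvP KeLe).
have piLeLe : piLe \in Le.
  rewrite rpredM ?rpredV ?rpredX // rpredM ?rpredX //; by apply: (subvP LLe).
have dKe : \dim Ke = e.
  apply/eqP; rewrite eqn_leq; apply/andP; split.
    rewrite dim_Fadjoin dimv1 muln1; apply: adj_deg e0 _ hKe; apply/vlineP; by exists piK.
  by move: (dim_ge hv hZ e0 npiKe vpiKe piKeKe).
have dLe : \dim Le = (n * e)%N.
  apply/eqP; rewrite eqn_leq; apply/andP; split; last first.
    by move: (dim_ge hv hZ ne0 npiLe vpiLe piLeLe).
  have sub : (Le <= <<L; piKe>>%AS)%VS.
    apply: prodv_sub; first exact: subv_adjoin.
    exact: adjoinSl (sub1v L).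
  apply: leq_trans (dimvS sub) _; rewrite dim_Fadjoin hdim mulnC leq_pmul2l //.
  exact: adj_deg e0 piKL hKe.
have uKe : uniformizer v Ke piKe := unif_pow hv hZ e0 npiKe vpiKe piKeKe dKe.
have uLe : uniformizer v Le piLe := unif_pow hv hZ ne0 npiLe vpiLe piLeLe dLe.
have hd : val_ge v (piLe ^+ n - piKe) (e%:R^-1 + n%:R^-1).
  rewrite hLen.
  have -> : piKe / y - piKe = piKe * (1 - y) / y by field.
  have h1 : val_ge v (1 - y) n%:R^-1 by rewrite -opprB; apply: (vge_opp hv).
  by have := vge_div hv (vge_mul hv (vge_exact v piKe) h1) ny; rewrite vy subr0 vpiKe.
have hcK : val_ge v (piK%:A - piL ^+ n) ((n.+1)%:R / n%:R).
  rewrite hz0e; have := vge_mul hv (vge_exact v (piL ^+ n.+1)) hz0.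
  by rewrite addr0 vX // vpiL.
split; first split.
- split; [exact: sub1v| by rewrite dimv1 divn1 |].
  exists piK%:A, piKe; split => //; by rewrite vpiKe vpiK divff.
- split => //; first by rewrite dLe hdim mulKn.
  exists piL, piLe; split => //; rewrite vpiLe vpiL natrM invfM; field; by rewrite ?eR ?nR.
exists piLe; split => //.
  exists ((piLe ^+ n - piKe) / piLe ^+ n.+1).
    by rewrite rpredM ?rpredV ?rpredB ?rpredX.
  split; last by rewrite mulrC divfK // expf_neq0.
  have := vge_div hv hd (expf_neq0 n.+1 npiLe); rewrite vX // vpiLe => h.
  apply: vge_le h _; rewrite subr_ge0; exact: rat_ineq.
move=> F hF0 hFint hFser.
have := part3 hv hK n0 e0 neE veE npiL vpiL hLe npiLe vpiLe npiKe vpiKe hKe hd hcK hF0 hFint hFser.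
exact.
Qed.
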